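(* Let $f\in\mathrm{Homeo}_+(\mathbb{R})$ satisfy $f(x+1)=f(x)+2$ for all $x$ and $f(0)=0$, and let $\theta_f$ be defined on $PL_2(\mathbb{R})$ as in the context. Then for every $h\in PL_2(\mathbb{R})$, $\theta_f(h)$ is a self-homeomorphism of $\mathbb{R}$.
   Context: $\mathbb{Q}_2$ denotes the dyadic rationals. $GA(\mathbb{Q}_2)$ is the group of affine maps $x\mapsto 2^nx+r$ ($n\in\mathbb{Z}$, $r\in\mathbb{Q}_2$); $T_r(x)=x+r$, $D(x)=2x$. There is a unique injective homomorphism $\theta_f:GA(\mathbb{Q}_2)\to\mathrm{Homeo}_+(\mathbb{R})$ with $\theta_f(T_1)=T_1$, $\theta_f(D)=f$. For $r=p/2^q\in\mathbb{Q}_2$ put $\bar r=f^{-q}(p)$ (well defined, strictly increasing). $PL_2(\mathbb{R})$ is the group of homeomorphisms $h$ of $\mathbb{R}$ that are piecewise linear with a locally finite set of break points, all in $\mathbb{Q}_2$, such that near each non-break point $h$ agrees with an element of $GA(\mathbb{Q}_2)$. For $h\in PL_2(\mathbb{R})$ choose a strictly increasing sequence $(x_n)_{n\in\mathbb{Z}}$ in $\mathbb{Q}_2$ with $x_n\to\pm\infty$ as $n\to\pm\infty$ and $\gamma_n\in GA(\mathbb{Q}_2)$ with $h=\gamma_n$ on $[x_n,x_{n+1}]$, and define $\theta_f(h)(t)=\theta_f(\gamma_n)(t)$ for $t\in[\bar x_n,\bar x_{n+1})$; this is independent of the choices. *)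

(* Defs.v *)
From Stdlib Require Import Reals ZArith List.
Open Scope R_scope.

Definition homeo (g : R -> R) : Prop :=
  continuity g /\
  exists g' : R -> R,
    (forall x, g' (g x) = x) /\ (forall y, g (g' y) = y) /\ continuity g'.

Definition dyadic (x : R) : Prop :=
  exists (p : Z) (q : nat), x = IZR p / 2 ^ q.

Definition ga_map (n p : Z) (q : nat) : R -> R :=
  fun x => powerRZ 2 n * x + IZR p / 2 ^ q.

Definition in_GA (g : R -> R) : Prop :=
  exists (n p : Z) (q : nat), forall x, g x = ga_map n p q x.

(* PL_2(R): homeomorphisms, locally affine (agreeing with an element of
   GA(Q_2)) off a locally finite set of dyadic break points. *)
Definition PL2 (h : R -> R) : Prop :=
  homeo h /\
  exists B : R -> Prop,
    (forall y, B y -> dyadic y) /\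
    (forall M, exists l : list R, forall y, B y -> Rabs y <= M -> In y l) /\
    (forall x, ~ B x ->
       exists g eps, in_GA g /\ 0 < eps /\
         forall y, Rabs (y - x) < eps -> h y = g y).

Definition fpowZ (f finv : R -> R) (n : Z) : R -> R :=
  match n with
  | Z0 => fun x => x
  | Zpos k => Nat.iter (Pos.to_nat k) f
  | Zneg k => Nat.iter (Pos.to_nat k) finv
  end.

(* theta_f(T_r) for r = p/2^q : f^{-q} o T_p o f^q  (= theta_f(D^{-q} T_p D^q)). *)
Definition theta_T (f finv : R -> R) (p : Z) (q : nat) : R -> R :=
  fun t => Nat.iter q finv (Nat.iter q f t + IZR p).

(* theta_f of x |-> 2^n x + p/2^q  = theta_f(T_{p/2^q}) o theta_f(D^n). *)
Definition theta_GA (f finv : R -> R) (n p : Z) (q : nat) : R -> R :=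
  fun t => theta_T f finv p q (fpowZ f finv n t).

Definition rbar (finv : R -> R) (p : Z) (q : nat) : R :=
  Nat.iter q finv (IZR p).

(* Main.v *)
Require Import Defs.
From Stdlib Require Import Reals ZArith List Lra ClassicalEpsilon Lia.
Open Scope R_scope.

Definition Fgood (f finv : R -> R) :=
  (forall x y, x < y -> f x < f y) /\ (forall x, finv (f x) = x) /\
  (forall y, f (finv y) = y) /\ (forall x, f (x + 1) = f x + 2) /\ f 0 = 0.

Definition incs (g : R -> R) :=
  (forall x y, x < y -> g x < g y) /\ (forall y, exists x, g x = y).

Lemma incs_le g x y : incs g -> x <= y -> g x <= g y.
Proof. intros [H _] [Hl|Hl]; [left; auto | right; subst; auto]. Qed.

Lemma incs_rev g x y : incs g -> g x < g y -> x < y.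
Proof. intros Hg H. destruct (Rlt_or_le x y) as [|Hl]; auto.
  apply (incs_le g) in Hl; auto. lra. Qed.

Lemma incs_comp g1 g2 : incs g1 -> incs g2 -> incs (fun x => g1 (g2 x)).
Proof. intros [A B] [C D]; split; auto.
  intro y. destruct (B y) as [z Hz]. destruct (D z) as [w Hw]. exists w. congruence. Qed.

Lemma incs_iter g n : incs g -> incs (Nat.iter n g).
Proof. intro Hg. induction n; simpl.
  - split; auto. intro y; exists y; auto.
  - apply (incs_comp g (Nat.iter n g)); auto. Qed.

Lemma incs_id : incs (fun x => x).
Proof. split; auto. intro y; exists y; auto. Qed.

Lemma incs_f f finv : Fgood f finv -> incs f.
Proof. intros (A&B&C&D&E). split; auto. intro y; exists (finv y); auto. Qed.

Lemma incs_finv f finv : Fgood f finv -> incs finv.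
Proof. intros Hf. pose proof (incs_f _ _ Hf) as Hi. destruct Hf as (A&B&C&D&E). split.
  - intros x y H. apply (incs_rev f); auto. rewrite !C; auto.
  - intro y; exists (f y); auto. Qed.

Lemma f_shift f finv : Fgood f finv -> forall z x, f (x + IZR z) = f x + 2 * IZR z.
Proof. intros (A&B&C&D&E) z. induction z using Z.peano_ind; intro x.
  - simpl. rewrite Rplus_0_r; ring.
  - rewrite succ_IZR. replace (x + (IZR z + 1)) with ((x + IZR z) + 1) by ring.
    rewrite D, IHz. ring.
  - assert (EE: IZR z = IZR (Z.pred z) + 1) by (rewrite <- succ_IZR, Z.succ_pred; reflexivity).
    specialize (IHz x). rewrite EE in IHz.
    replace (x + (IZR (Z.pred z) + 1)) with ((x + IZR (Z.pred z)) + 1) in IHz by ring.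
    rewrite D in IHz. lra.
Qed.

Lemma finv_shift f finv : Fgood f finv -> forall z y, finv (y + 2 * IZR z) = finv y + IZR z.
Proof. intros Hf z y. pose proof (f_shift _ _ Hf) as S. destruct Hf as (A&B&C&D&E).
  rewrite <- (B (finv y + IZR z)), S, C. reflexivity. Qed.

Lemma finv_int f finv : Fgood f finv -> forall p, finv (2 * IZR p) = IZR p.
Proof. intros Hf p. pose proof (finv_shift _ _ Hf p 0) as S.
  destruct Hf as (A&B&C&D&E). rewrite Rplus_0_l in S. rewrite S.
  rewrite <- E, B. ring. Qed.

Lemma lift f finv : Fgood f finv -> forall k p, Nat.iter k finv (IZR p * 2 ^ k) = IZR p.
Proof. intros Hf k. induction k; intro p.
  - simpl. ring.
  - change (Nat.iter (S k) finv (IZR p * 2 ^ S k)) with (finv (Nat.iter k finv (IZR p * (2 * 2 ^ k)))). replace (IZR p * (2 * 2 ^ k)) with (IZR (2*p) * 2 ^ k) by (rewrite mult_IZR; ring).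
    rewrite IHk, mult_IZR. apply (finv_int f); auto. Qed.

Lemma rep_indep f finv : Fgood f finv -> forall p q p' q',
  IZR p / 2 ^ q = IZR p' / 2 ^ q' -> Nat.iter q finv (IZR p) = Nat.iter q' finv (IZR p').
Proof. intros Hf p q p' q' E.
  rewrite <- (lift f finv Hf q' p), <- (lift f finv Hf q p').
  rewrite <- !Nat.iter_add. rewrite (Nat.add_comm q' q).
  f_equal.
  assert (h1: 2 ^ q <> 0) by (apply pow_nonzero; lra).
  assert (h2: 2 ^ q' <> 0) by (apply pow_nonzero; lra).
  assert (IZR p * 2 ^ q' = IZR p / 2 ^ q * (2^q * 2^q')) by (field; auto).
  assert (IZR p' * 2 ^ q = IZR p' / 2 ^ q' * (2^q * 2^q')) by (field; auto).
  congruence. Qed.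

Definition Phi (finv : R -> R) (x : R) : R :=
  match excluded_middle_informative (dyadic x) with
  | left H => let s := constructive_indefinite_description _ H in
              let s2 := constructive_indefinite_description _ (proj2_sig s) in
              Nat.iter (proj1_sig s2) finv (IZR (proj1_sig s))
  | right _ => 0 end.

Lemma Phi_spec f finv : Fgood f finv -> forall p q,
  Phi finv (IZR p / 2 ^ q) = Nat.iter q finv (IZR p).
Proof. intros Hf p q. unfold Phi.
  destruct (excluded_middle_informative _) as [H|H].
  - cbv zeta. destruct (constructive_indefinite_description _ H) as [p0 H0]. simpl.
    destruct (constructive_indefinite_description _ H0) as [q0 E0]. simpl.
    apply (rep_indep f); auto.
  - exfalso; apply H; exists p, q; reflexivity. Qed.
Lemma p2nz q : 2 ^ q <> 0.
Proof. apply pow_nonzero; lra. Qed.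

Lemma dy_int k : dyadic (IZR k).
Proof. exists k, 0%nat. simpl. field. Qed.
Lemma dy_mul2 x : dyadic x -> dyadic (2 * x).
Proof. intros [p [q ->]]. exists (2*p)%Z, q. rewrite mult_IZR. field. apply p2nz. Qed.
Lemma dy_div2 x : dyadic x -> dyadic (x / 2).
Proof. intros [p [q ->]]. exists p, (S q). simpl. field. apply p2nz. Qed.
Lemma dy_add x y : dyadic x -> dyadic y -> dyadic (x + y).
Proof. intros [a [q ->]] [b [r ->]]. exists (a * 2 ^ Z.of_nat r + b * 2 ^ Z.of_nat q)%Z, (q + r)%nat.
  rewrite plus_IZR, !mult_IZR, <- !pow_IZR, pow_add. field. split; apply p2nz. Qed.
Lemma dy_pow2 n x : dyadic x -> dyadic (2 ^ n * x).
Proof. intro H. induction n; simpl. rewrite Rmult_1_l; auto.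
  rewrite Rmult_assoc. apply dy_mul2; auto. Qed.
Lemma dy_powinv n x : dyadic x -> dyadic (/ 2 ^ n * x).
Proof. intro H. induction n; simpl. rewrite Rinv_1, Rmult_1_l; auto.
  replace (/ (2 * 2 ^ n) * x) with ((/ 2 ^ n * x) / 2) by (field; apply p2nz).
  apply dy_div2; auto. Qed.
Lemma dy_powerRZ N x : dyadic x -> dyadic (powerRZ 2 N * x).
Proof. intro H. destruct N; simpl. rewrite Rmult_1_l; auto.
  apply dy_pow2; auto. apply dy_powinv; auto. Qed.
Lemma dy_ga N P Q x : dyadic x -> dyadic (ga_map N P Q x).
Proof. intro H. unfold ga_map. apply dy_add. apply dy_powerRZ; auto. exists P, Q; auto. Qed.

Section PhiS.
Variables (f finv : R -> R) (Hf : Fgood f finv).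

Lemma Phi_int k : Phi finv (IZR k) = IZR k.
Proof. replace (IZR k) with (IZR k / 2 ^ 0) at 1 by (simpl; field).
  rewrite (Phi_spec f); auto. Qed.

Lemma Phi_2 x : dyadic x -> Phi finv (2 * x) = f (Phi finv x).
Proof. intros [p [q ->]].
  assert (E1 : 2 * (IZR p / 2 ^ q) = IZR (2*p) / 2 ^ q) by (rewrite mult_IZR; field; apply p2nz).
  assert (E2 : IZR p / 2 ^ q = IZR (2*p) / 2 ^ (S q)) by (rewrite mult_IZR; simpl; field; apply p2nz).
  rewrite E1, E2, !(Phi_spec f); auto.
  change (Nat.iter (S q) finv (IZR (2 * p))) with (finv (Nat.iter q finv (IZR (2 * p)))).
  destruct Hf as (A&B&C&D&E). rewrite C. auto. Qed.

Lemma Phi_half x : dyadic x -> Phi finv (x / 2) = finv (Phi finv x).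
Proof. intros [p [q ->]].
  assert (E2 : IZR p / 2 ^ q / 2 = IZR p / 2 ^ (S q)) by (simpl; field; apply p2nz).
  rewrite E2, !(Phi_spec f); auto. Qed.

Lemma iter_shift q : forall k y, Nat.iter q finv (y + IZR k * 2 ^ q) = Nat.iter q finv y + IZR k.
Proof. induction q; intros k y.
  - simpl. ring.
  - change (Nat.iter (S q) finv (y + IZR k * 2 ^ S q)) with (finv (Nat.iter q finv (y + IZR k * (2 * 2 ^ q)))).
    replace (y + IZR k * (2 * 2 ^ q)) with (y + IZR (2 * k) * 2 ^ q) by (rewrite mult_IZR; ring).
    rewrite IHq, mult_IZR. simpl. apply (finv_shift f); auto. Qed.

Lemma Phi_addint x k : dyadic x -> Phi finv (x + IZR k) = Phi finv x + IZR k.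
Proof. intros [p [q ->]].
  replace (IZR p / 2 ^ q + IZR k) with (IZR (p + k * 2 ^ Z.of_nat q) / 2 ^ q)
    by (rewrite plus_IZR, mult_IZR, <- pow_IZR; field; apply p2nz).
  rewrite !(Phi_spec f); auto. rewrite plus_IZR, mult_IZR, <- pow_IZR. apply iter_shift. Qed.

Lemma Phi_mono x y : dyadic x -> dyadic y -> x < y -> Phi finv x < Phi finv y.
Proof. intros [a [q ->]] [b [r ->]] H.
  replace (IZR a / 2 ^ q) with (IZR (a * 2 ^ Z.of_nat r) / 2 ^ (q + r))
    by (rewrite mult_IZR, <- pow_IZR, pow_add; field; split; apply p2nz).
  replace (IZR b / 2 ^ r) with (IZR (b * 2 ^ Z.of_nat q) / 2 ^ (q + r))
    by (rewrite mult_IZR, <- pow_IZR, pow_add; field; split; apply p2nz).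
  rewrite !(Phi_spec f); auto.
  apply (incs_iter finv (q + r) (incs_finv f finv Hf)).
  rewrite !mult_IZR, <- !pow_IZR.
  assert (0 < 2 ^ q) by (apply pow_lt; lra). assert (0 < 2 ^ r) by (apply pow_lt; lra).
  apply (Rmult_lt_compat_r (2 ^ q * 2 ^ r)) in H; [|apply Rmult_lt_0_compat; auto].
  replace (IZR a / 2 ^ q * (2 ^ q * 2 ^ r)) with (IZR a * 2 ^ r) in H by (field; lra).
  replace (IZR b / 2 ^ r * (2 ^ q * 2 ^ r)) with (IZR b * 2 ^ q) in H by (field; lra).
  auto. Qed.

Lemma Phi_iterf m x : dyadic x -> Nat.iter m f (Phi finv x) = Phi finv (2 ^ m * x).
Proof. intro H. induction m.
  - simpl. rewrite Rmult_1_l; auto.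
  - change (Nat.iter (S m) f (Phi finv x)) with (f (Nat.iter m f (Phi finv x))).
    rewrite IHm, <- Phi_2. simpl. rewrite Rmult_assoc; auto. apply dy_pow2; auto. Qed.

Lemma Phi_iterfinv m x : dyadic x -> Nat.iter m finv (Phi finv x) = Phi finv (/ 2 ^ m * x).
Proof. intro H. induction m.
  - simpl. rewrite Rinv_1, Rmult_1_l; auto.
  - change (Nat.iter (S m) finv (Phi finv x)) with (finv (Nat.iter m finv (Phi finv x))).
    rewrite IHm, <- Phi_half. f_equal. simpl. field. apply p2nz. apply dy_powinv; auto. Qed.

Lemma Phi_fpowZ N x : dyadic x -> fpowZ f finv N (Phi finv x) = Phi finv (powerRZ 2 N * x).
Proof. intro H. destruct N; simpl.
  - rewrite Rmult_1_l; auto.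
  - apply Phi_iterf; auto.
  - apply Phi_iterfinv; auto. Qed.

Lemma Phi_GA N P Q x : dyadic x -> theta_GA f finv N P Q (Phi finv x) = Phi finv (ga_map N P Q x).
Proof. intro H. unfold theta_GA, theta_T, ga_map.
  rewrite Phi_fpowZ, Phi_iterf, <- Phi_addint, Phi_iterfinv; auto.
  - f_equal. field. apply p2nz.
  - apply dy_add. apply dy_pow2, dy_powerRZ; auto. apply dy_int.
  - apply dy_pow2, dy_powerRZ; auto.
  - apply dy_powerRZ; auto. Qed.

Lemma incs_fpowZ N : incs (fpowZ f finv N).
Proof. destruct N; simpl. apply incs_id. apply incs_iter, (incs_f f finv); auto.
  apply incs_iter, (incs_finv f finv); auto. Qed.

Lemma incs_GA N P Q : incs (theta_GA f finv N P Q).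
Proof. unfold theta_GA, theta_T.
  apply (incs_comp (fun t => Nat.iter Q finv (Nat.iter Q f t + IZR P))).
  - apply (incs_comp (Nat.iter Q finv) (fun t => Nat.iter Q f t + IZR P)).
    + apply incs_iter, (incs_finv f finv); auto.
    + apply (incs_comp (fun t => t + IZR P)). split. intros; lra. intro y; exists (y - IZR P); ring.
      apply incs_iter, (incs_f f finv); auto.
  - apply incs_fpowZ. Qed.
End PhiS.
Lemma incs_cont g : incs g -> continuity g.
Proof. intros Hg x. pose proof Hg as [Hm Hs].
  unfold continuity_pt, continue_in, limit1_in, limit_in. intros eps Heps.
  destruct (Hs (g x - eps)) as [a Ha]; destruct (Hs (g x + eps)) as [b Hb].
  assert (a < x) by (apply (incs_rev g); auto; lra).
  assert (x < b) by (apply (incs_rev g); auto; lra).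
  exists (Rmin (x - a) (b - x)). split. apply Rmin_pos; lra.
  intros z [_ Hz]. simpl in *. unfold R_dist in *.
  apply Rabs_def2 in Hz. pose proof (Rmin_l (x-a) (b-x)). pose proof (Rmin_r (x-a) (b-x)).
  assert (g a < g z) by (apply Hm; lra). assert (g z < g b) by (apply Hm; lra).
  apply Rabs_def1; lra. Qed.

Lemma incs_homeo g : incs g -> homeo g.
Proof. intros Hg. split. apply incs_cont; auto.
  pose proof Hg as [Hm Hs].
  exists (fun y => proj1_sig (constructive_indefinite_description _ (Hs y))).
  assert (Hinv : forall y, g (proj1_sig (constructive_indefinite_description _ (Hs y))) = y).
  { intro y. destruct (constructive_indefinite_description _ (Hs y)); auto. }
  assert (Hinj : forall u v, g u = g v -> u = v).
  { intros u v E. destruct (Rtotal_order u v) as [L|[L|L]]; auto; apply Hm in L; lra. }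
  assert (H1 : forall x, proj1_sig (constructive_indefinite_description _ (Hs (g x))) = x).
  { intro x. apply Hinj. apply Hinv. }
  split; [auto|split; [auto|]].
  apply incs_cont. split.
  - intros u v L. apply (incs_rev g); auto. rewrite !Hinv; auto.
  - intro y. exists (g y). apply H1. Qed.

Lemma seq_mono (a : Z -> R) : (forall n, a n < a (n+1)%Z) -> forall n m, (n < m)%Z -> a n < a m.
Proof. intros Ha.
  assert (K : forall k n, a n < a (n + Z.of_nat (S k))%Z).
  { induction k; intro n. replace (n + Z.of_nat 1)%Z with (n+1)%Z by lia. auto.
    replace (n + Z.of_nat (S (S k)))%Z with (n + Z.of_nat (S k) + 1)%Z by lia.
    specialize (IHk n). specialize (Ha (n + Z.of_nat (S k))%Z). lra. }
  intros n m L. replace m with (n + Z.of_nat (S (Z.to_nat (m - n - 1))))%Z by lia. auto. Qed.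

Lemma seq_le (a : Z -> R) : (forall n, a n < a (n+1)%Z) -> forall n m, (n <= m)%Z -> a n <= a m.
Proof. intros Ha n m L. destruct (Z.eq_dec n m). subst; lra. left; apply seq_mono; auto; lia. Qed.

Lemma locate (a : Z -> R) : (forall n, a n < a (n+1)%Z) -> (forall M, exists n, M < a n) ->
  (forall M, exists n, a n < M) -> forall t, exists n, a n <= t < a (n+1)%Z.
Proof. intros Ha Ht Hb t.
  assert (K : forall k n, a n <= t -> t < a (n + Z.of_nat k)%Z -> exists m, a m <= t < a (m+1)%Z).
  { induction k; intros n H1 H2. simpl in H2. rewrite Z.add_0_r in H2. lra.
    destruct (Rlt_or_le t (a (n+1)%Z)). exists n; auto.
    apply (IHk (n+1)%Z); auto. replace (n + 1 + Z.of_nat k)%Z with (n + Z.of_nat (S k))%Z by lia. auto. }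
  destruct (Hb t) as [n0 H0]. destruct (Ht t) as [n1 H1].
  destruct (Z_lt_le_dec n0 n1) as [L|L].
  - apply (K (Z.to_nat (n1 - n0)) n0). lra. replace (n0 + Z.of_nat (Z.to_nat (n1 - n0)))%Z with n1 by lia. auto.
  - pose proof (seq_le a Ha n1 n0 L). lra. Qed.

Lemma piece_mono (a : Z -> R) (F : R -> R) (g : Z -> R -> R) :
  (forall n, a n < a (n+1)%Z) -> (forall t, exists n, a n <= t < a (n+1)%Z) ->
  (forall n x y, x < y -> g n x < g n y) ->
  (forall n, g n (a (n+1)%Z) <= g (n+1)%Z (a (n+1)%Z)) ->
  (forall n t, a n <= t < a (n+1)%Z -> F t = g n t) ->
  forall t s, t < s -> F t < F s.
Proof. intros Ha Hl Hg Hj HF t s L.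
  assert (Hgl : forall n x y, x <= y -> g n x <= g n y).
  { intros n x y [E|E]. left; auto. subst; lra. }
  assert (C : forall k n, g n (a (n+1)%Z) <= g (n+1+Z.of_nat k)%Z (a (n+1+Z.of_nat k))%Z).
  { induction k; intro n. simpl. rewrite Z.add_0_r. auto.
    specialize (IHk n). pose proof (Hg (n+1+Z.of_nat k)%Z _ _ (Ha (n+1+Z.of_nat k)%Z)).
    pose proof (Hj (n+1+Z.of_nat k)%Z).
    replace (n + 1 + Z.of_nat (S k))%Z with (n+1+Z.of_nat k+1)%Z by lia. lra. }
  destruct (Hl t) as [n Hn]. destruct (Hl s) as [m Hm].
  rewrite (HF n t Hn), (HF m s Hm).
  destruct (Z.lt_trichotomy n m) as [E|[E|E]].
  - pose proof (Hg n _ _ (proj2 Hn)). pose proof (C (Z.to_nat (m - n - 1)) n).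
    replace (n + 1 + Z.of_nat (Z.to_nat (m - n - 1)))%Z with m in H0 by lia.
    pose proof (Hgl m _ _ (proj1 Hm)). lra.
  - subst. apply Hg; auto.
  - pose proof (seq_le a Ha (m+1)%Z n ltac:(lia)). lra. Qed.

Theorem mainTheorem5
  (f finv : R -> R)
  (Hfcont : continuity f)
  (Hfincr : forall x y, x < y -> f x < f y)
  (Hfinv1 : forall x, finv (f x) = x)
  (Hfinv2 : forall y, f (finv y) = y)
  (Hf1 : forall x, f (x + 1) = f x + 2)
  (Hf0 : f 0 = 0)
  (h : R -> R) (Hh : PL2 h)
  (xp : Z -> Z) (xq : Z -> nat)
  (Hxinc : forall n : Z, IZR (xp n) / 2 ^ (xq n) < IZR (xp (n + 1)%Z) / 2 ^ (xq (n + 1)%Z))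
  (Hxtop : forall M : R, exists n : Z, M < IZR (xp n) / 2 ^ (xq n))
  (Hxbot : forall M : R, exists n : Z, IZR (xp n) / 2 ^ (xq n) < M)
  (ga gp : Z -> Z) (gq : Z -> nat)
  (Hgamma : forall (n : Z) (y : R),
      IZR (xp n) / 2 ^ (xq n) <= y <= IZR (xp (n + 1)%Z) / 2 ^ (xq (n + 1)%Z) ->
      h y = ga_map (ga n) (gp n) (gq n) y)
  (th : R -> R)
  (Hth : forall (n : Z) (t : R),
      rbar finv (xp n) (xq n) <= t < rbar finv (xp (n + 1)%Z) (xq (n + 1)%Z) ->
      th t = theta_GA f finv (ga n) (gp n) (gq n) t) :
  homeo th.
Proof.
  assert (Hf : Fgood f finv) by (repeat split; auto).
  set (X := fun n => IZR (xp n) / 2 ^ (xq n)).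
  assert (HXd : forall n, dyadic (X n)) by (intro n; exists (xp n), (xq n); reflexivity).
  assert (HY : forall n, rbar finv (xp n) (xq n) = Phi finv (X n)).
  { intro n. unfold X, rbar. rewrite (Phi_spec f); auto. }
  assert (HXinc : forall n, X n < X (n+1)%Z) by exact Hxinc.
  assert (HXloc := locate X HXinc Hxtop Hxbot).
  set (gm := fun n => ga_map (ga n) (gp n) (gq n)).
  assert (Hgm : forall n x y, x < y -> gm n x < gm n y).
  { intros n x y L. unfold gm, ga_map. assert (0 < powerRZ 2 (ga n)) by (apply powerRZ_lt; lra).
    apply Rplus_lt_compat_r. apply Rmult_lt_compat_l; auto. }
  assert (Hhmono : forall t s, t < s -> h t < h s).
  { apply (piece_mono X h gm); auto.
    - intro n. unfold gm. rewrite <- (Hgamma n), <- (Hgamma (n+1)%Z). lra.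
      + pose proof (HXinc (n+1)%Z). unfold X in *. split; lra.
      + pose proof (HXinc n). unfold X in *. split; lra.
    - intros n t Ht. apply Hgamma. unfold X in *; lra. }
  assert (HhX : forall n, h (X n) = gm n (X n)).
  { intro n. apply Hgamma. pose proof (HXinc n). unfold X in *; lra. }
  assert (HhX' : forall n, h (X (n+1)%Z) = gm n (X (n+1)%Z)).
  { intro n. apply Hgamma. pose proof (HXinc n). unfold X in *; lra. }
  assert (HhXd : forall n, dyadic (h (X n))).
  { intro n. rewrite HhX. apply dy_ga; auto. }
  set (G := fun n => theta_GA f finv (ga n) (gp n) (gq n)).
  assert (HG1 : forall n, G n (Phi finv (X n)) = Phi finv (h (X n))).
  { intro n. unfold G. rewrite (Phi_GA f); auto. rewrite HhX. reflexivity. }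
  assert (HG2 : forall n, G n (Phi finv (X (n+1)%Z)) = Phi finv (h (X (n+1)%Z))).
  { intro n. unfold G. rewrite (Phi_GA f); auto. rewrite HhX'. reflexivity. }
  set (Y := fun n => Phi finv (X n)).
  assert (HYinc : forall n, Y n < Y (n+1)%Z).
  { intro n. apply (Phi_mono f); auto. }
  assert (HYtop : forall M, exists n, M < Y n).
  { intro M. destruct (archimed M) as [A1 _]. destruct (Hxtop (IZR (up M))) as [n Hn].
    exists n. unfold Y. rewrite <- (Phi_int f finv Hf (up M)) in A1.
    pose proof (Phi_mono f finv Hf (IZR (up M)) (X n) (dy_int _) (HXd n) Hn). lra. }
  assert (HYbot : forall M, exists n, Y n < M).
  { intro M. destruct (archimed M) as [A1 A2]. destruct (Hxbot (IZR (up M - 2))) as [n Hn].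
    exists n. unfold Y.
    pose proof (Phi_mono f finv Hf (X n) (IZR (up M - 2)) (HXd n) (dy_int _) Hn).
    rewrite (Phi_int f finv Hf) in H. rewrite minus_IZR in H. lra. }
  set (Hs := fun n => Phi finv (h (X n))).
  assert (HHinc : forall n, Hs n < Hs (n+1)%Z).
  { intro n. apply (Phi_mono f); auto. }
  destruct Hh as [[_ [h' [_ [Hh'2 _]]]] _].
  assert (HHtop : forall M, exists n, M < Hs n).
  { intro M. destruct (archimed M) as [A1 _]. destruct (Hxtop (h' (IZR (up M)))) as [n Hn].
    exists n. unfold Hs. apply Hhmono in Hn. rewrite Hh'2 in Hn.
    rewrite <- (Phi_int f finv Hf (up M)) in A1.
    pose proof (Phi_mono f finv Hf (IZR (up M)) (h (X n)) (dy_int _) (HhXd n) Hn). lra. }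
  assert (HHbot : forall M, exists n, Hs n < M).
  { intro M. destruct (archimed M) as [A1 A2]. destruct (Hxbot (h' (IZR (up M - 2)))) as [n Hn].
    exists n. unfold Hs. apply Hhmono in Hn. rewrite Hh'2 in Hn.
    pose proof (Phi_mono f finv Hf (h (X n)) (IZR (up M - 2)) (HhXd n) (dy_int _) Hn).
    rewrite (Phi_int f finv Hf) in H. rewrite minus_IZR in H. lra. }
  assert (Hth' : forall n t, Y n <= t < Y (n+1)%Z -> th t = G n t).
  { intros n t Ht. apply Hth. rewrite !HY. exact Ht. }
  apply incs_homeo. split.
  - apply (piece_mono Y th G); auto.
    + apply locate; auto.
    + intros n. apply (incs_GA f finv Hf).
    + intro n. unfold Y. rewrite HG2, HG1. lra.
  - intro y. destruct (locate Hs HHinc HHtop HHbot y) as [n Hn].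
    destruct (proj2 (incs_GA f finv Hf (ga n) (gp n) (gq n)) y) as [t Ht].
    fold (G n) in Ht. exists t. rewrite (Hth' n); auto.
    pose proof (HG1 n) as E1. pose proof (HG2 n) as E2. fold (Y n) in E1.
    fold (Hs n) in E1. fold (Hs (n+1)%Z) in E2.
    assert (Gi := incs_GA f finv Hf (ga n) (gp n) (gq n)). fold (G n) in Gi.
    split.
    + destruct (Rlt_or_le t (Y n)) as [L|L]; auto. apply (proj1 Gi) in L. lra.
    + destruct (Rlt_or_le t (Y (n+1)%Z)) as [L|L]; auto. apply (incs_le _ _ _ Gi) in L.
      unfold Y in L. lra.
Qed.
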